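(* Let $\bar{\boldsymbol{\Psi}}_{\mathrm{id}}=\mathrm{diag}(\bar\psi_{\mathrm{id},1},\dots,\bar\psi_{\mathrm{id},N})$ with all entries positive, $\bar\psi_{\mathrm{f},1}>0$, $\mathbf{w}_1=(w_{11},\dots,w_{1N})^\top\in\mathbb{R}^N\setminus\{\mathbf{0}\}$, $\theta\in[0,1]$, and $\alpha_1,\dots,\alpha_T>0$, $\beta_1,\dots,\beta_T>0$ with $\sum_t\alpha_t=\sum_t\beta_t=1$. For nonzero $\mathbf{x}_0\in\mathbb{R}^N$ let $$\Upsilon(\mathbf{x}_0)=\frac{\sum_{t=1}^T(\alpha_t(1-\theta)+\beta_t\theta)^2\,\mathbf{x}_0^\top\left(\alpha_t\bar{\boldsymbol{\Psi}}_{\mathrm{id}}+\beta_t\bar\psi_{\mathrm{f},1}\mathbf{w}_1\mathbf{w}_1^\top\right)^{-1}\mathbf{x}_0}{\mathbf{x}_0^\top\left(\bar{\boldsymbol{\Psi}}_{\mathrm{id}}+\bar\psi_{\mathrm{f},1}\mathbf{w}_1\mathbf{w}_1^\top\right)^{-1}\mathbf{x}_0},$$ $\gamma_t=\beta_t/\alpha_t$, $\eta_1=\bar\psi_{\mathrm{f},1}\mathbf{w}_1^\top\bar{\boldsymbol{\Psi}}_{\mathrm{id}}^{-1}\mathbf{w}_1$, $\Delta=\sum_{t=1}^T\frac{\alpha_t(1-\theta(1-\gamma_t))^2(1-\gamma_t)}{1+\eta_1\gamma_t}$, and $\eta_{1,i}=\frac{w_{1i}^2\bar\psi_{\mathrm{f},1}}{\bar\psi_{\mathrm{id},i}}$.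 Then for each standard basis vector $\mathbf{e}_i$, $$\Upsilon(\mathbf{e}_i)=1+\theta^2\Big(\sum_{t=1}^T\frac{\beta_t^2}{\alpha_t}-1\Big)+\frac{\eta_{1,i}}{1+\eta_1-\eta_{1,i}}\,\Delta,$$ and $$\arg\max_{i=1,\dots,N}\Upsilon(\mathbf{e}_i)=\begin{cases}\arg\max_{i}\ w_{1i}^2/\bar\psi_{\mathrm{id},i}&\text{if }\Delta\ge0,\\ \arg\min_{i}\ w_{1i}^2/\bar\psi_{\mathrm{id},i}&\text{if }\Delta\le0.\end{cases}$$
   Context: $\Upsilon(\mathbf{x}_0)$ is the ratio of the expected cost of the separable schedule $(\alpha_t(1-\theta)+\beta_t\theta)\mathbf{x}_0$ to the minimal expected cost of liquidating $\mathbf{x}_0$, with time-$t$ impact matrix $\mathbf{G}_t=\left(\alpha_t\bar{\boldsymbol{\Psi}}_{\mathrm{id}}+\beta_t\bar\psi_{\mathrm{f},1}\mathbf{w}_1\mathbf{w}_1^\top\right)^{-1}$ and cost $\sum_t\tfrac12\mathbf{v}_t^\top\mathbf{G}_t\mathbf{v}_t$; $\mathbf{e}_i$ corresponds to liquidating a single order in stock $i$. *)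

(* Defs.v *)
From HB Require Import structures.
From mathcomp Require Import all_boot all_order all_algebra.
Set Implicit Arguments. Unset Strict Implicit. Unset Printing Implicit Defensive.
Import Order.TTheory GRing.Theory Num.Theory.
Local Open Scope ring_scope.

Definition quad (R : comNzRingType) (N : nat) (x : 'cV[R]_N) (M : 'M[R]_N) : R :=
  (x^T *m M *m x) 0 0.

Definition Psi_id (R : comNzRingType) (N : nat) (psi : 'I_N -> R) : 'M[R]_N :=
  diag_mx (\row_i psi i).

Definition Gmat (R : comUnitRingType) (N : nat) (psi : 'I_N -> R) (psif : R)
  (w : 'cV[R]_N) (a b : R) : 'M[R]_N :=
  invmx (a *: Psi_id psi + (b * psif) *: (w *m w^T)).

Definition Upsilon (R : fieldType) (N T : nat) (psi : 'I_N -> R) (psif : R)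
  (w : 'cV[R]_N) (theta : R) (alpha beta : 'I_T -> R) (x0 : 'cV[R]_N) : R :=
  (\sum_(t < T) (alpha t * (1 - theta) + beta t * theta) ^+ 2
       * quad x0 (Gmat psi psif w (alpha t) (beta t)))
  / quad x0 (Gmat psi psif w 1 1).

Definition ebasis (R : comNzRingType) (N : nat) (i : 'I_N) : 'cV[R]_N :=
  delta_mx i 0.

Definition eta1 (R : comUnitRingType) (N : nat) (psi : 'I_N -> R) (psif : R)
  (w : 'cV[R]_N) : R :=
  psif * quad w (invmx (Psi_id psi)).

Definition eta1i (R : fieldType) (N : nat) (psi : 'I_N -> R) (psif : R)
  (w : 'cV[R]_N) (i : 'I_N) : R :=
  w i 0 ^+ 2 * psif / psi i.

Definition gam (R : fieldType) (T : nat) (alpha beta : 'I_T -> R) (t : 'I_T) : R :=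
  beta t / alpha t.

Definition Delta (R : fieldType) (N T : nat) (psi : 'I_N -> R) (psif : R)
  (w : 'cV[R]_N) (theta : R) (alpha beta : 'I_T -> R) : R :=
  \sum_(t < T) alpha t * (1 - theta * (1 - gam alpha beta t)) ^+ 2
      * (1 - gam alpha beta t) / (1 + eta1 psi psif w * gam alpha beta t).

(* Main.v *)
Require Import Defs.
From HB Require Import structures.
From mathcomp Require Import all_boot all_order all_algebra.
From mathcomp Require Import ring lra.
Import Order.TTheory GRing.Theory Num.Theory.
Local Open Scope ring_scope.

Lemma invmx_of (R : comUnitRingType) n (A B : 'M[R]_n) :
  A *m B = 1%:M -> invmx A = B.
Proof.
move=> AB; have [uA _] := mulmx1_unit AB.
by rewrite -[invmx A]mulmx1 -AB mulmxA mulVmx // mul1mx.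
Qed.

Lemma quad_e (R : comNzRingType) n (i : 'I_n) (A : 'M[R]_n) :
  quad (@ebasis R n i) A = A i i.
Proof.
by rewrite /quad /ebasis trmx_delta -rowE -colE !mxE.
Qed.

Section M.
Variables (R : fieldType) (N : nat) (psi : 'I_N -> R) (w : 'cV[R]_N).
Hypothesis psi0 : forall i, psi i != 0.
Definition Dinv : 'M[R]_N := diag_mx (\row_i (psi i)^-1).
Definition ss : R := \sum_j w j 0 ^+ 2 / psi j.
Definition uu := Dinv *m w.

Lemma PD : Psi_id psi *m Dinv = 1%:M.
Proof.
rewrite /Psi_id /Dinv mulmx_diag; apply/matrixP=> i j; rewrite !mxE.
by case: eqP => [->|]; rewrite ?mulr1n ?mulr0n ?mxE ?mulfV.
Qed.

Lemma PU : Psi_id psi *m uu = w.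
Proof. by rewrite /uu mulmxA PD mul1mx. Qed.

Lemma WD : w^T *m Dinv = uu^T.
Proof. by rewrite /uu trmx_mul /Dinv tr_diag_mx. Qed.

Lemma WU : w^T *m uu = ss%:M.
Proof.
apply/matrixP=> i j; rewrite !ord1 !mxE /uu /ss.
apply: eq_bigr => k _; rewrite !mxE (bigD1 k) //= big1 => [|l lk]; rewrite !mxE.
  by rewrite eqxx mulr1n addr0 mulrCA mulrC -expr2.
by rewrite eq_sym (negPf lk) mulr0n !mul0r.
Qed.

Definition Xm (a c : R) : 'M[R]_N :=
  a^-1 *: Dinv - (c / (a * (a + c * ss))) *: (uu *m uu^T).

Lemma MX (a c : R) : a != 0 -> a + c * ss != 0 ->
  (a *: Psi_id psi + c *: (w *m w^T)) *m Xm a c = 1%:M.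
Proof.
move=> a0 ac0; rewrite /Xm mulmxDl !mulmxBr -!scalemxAl -!scalemxAr.
rewrite PD (mulmxA (Psi_id psi)) PU -(mulmxA w) WD.
rewrite -(mulmxA w (w^T) (uu *m uu^T)) (mulmxA (w^T)) WU mul_scalar_mx -scalemxAr.
apply/matrixP=> i j; rewrite !mxE.
by field; rewrite ac0 a0.
Qed.

Lemma uuE : uu = \col_i (w i 0 / psi i).
Proof.
by rewrite /uu /Dinv mul_diag_mx; apply/matrixP=> i j; rewrite !mxE ord1 mulrC.
Qed.

Lemma Xii (a c : R) i :
  Xm a c i i = a^-1 / psi i - c / (a * (a + c * ss)) * (w i 0 / psi i) ^+ 2.
Proof.
rewrite /Xm uuE !mxE big_ord1 !mxE eqxx mulr1n expr2 //.
Qed.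

End M.

Lemma ss_ge (R : realFieldType) N (psi : 'I_N -> R) (w : 'cV[R]_N) (i : 'I_N) : (forall j, psi j > 0) ->
  w i 0 ^+ 2 / psi i <= @ss R N psi w.
Proof.
move=> hp; rewrite /ss (bigD1 i) //= lerDl sumr_ge0 // => j _.
by rewrite divr_ge0 ?sqr_ge0 ?ltW.
Qed.



Arguments invmx_of {R n A B}.
Arguments PD {R N psi}.
Arguments WU {R N psi w}.
Arguments MX {R N psi w}.
Arguments Xii {R N psi w}.
Arguments ss_ge {R N psi w}.

Lemma frac_mono (R : realFieldType) (A x y : R) :
  0 <= x -> 0 < A - x -> 0 < A - y -> x <= y -> x / (A - x) <= y / (A - y).
Proof.
move=> x0 hx hy xy; rewrite ler_pdivrMr // mulrAC ler_pdivlMr //; nra.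
Qed.

Theorem mainTheorem10 (R : realFieldType) (N T : nat)
  (psi : 'I_N -> R) (psif : R) (w : 'cV[R]_N) (theta : R)
  (alpha beta : 'I_T -> R)
  (hpsi : forall i, 0 < psi i) (hpsif : 0 < psif) (hw : w != 0)
  (htheta0 : 0 <= theta) (htheta1 : theta <= 1)
  (halpha : forall t, 0 < alpha t) (hbeta : forall t, 0 < beta t)
  (hsa : \sum_(t < T) alpha t = 1) (hsb : \sum_(t < T) beta t = 1) :
  (forall i : 'I_N,
     Upsilon psi psif w theta alpha beta (@ebasis R N i)
     = 1 + theta ^+ 2 * (\sum_(t < T) beta t ^+ 2 / alpha t - 1)
       + eta1i psi psif w i / (1 + eta1 psi psif w - eta1i psi psif w i)
         * Delta psi psif w theta alpha beta)
  /\ (0 <= Delta psi psif w theta alpha beta ->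
      forall i : 'I_N, (forall j, w j 0 ^+ 2 / psi j <= w i 0 ^+ 2 / psi i) ->
      forall j, Upsilon psi psif w theta alpha beta (@ebasis R N j)
                <= Upsilon psi psif w theta alpha beta (@ebasis R N i))
  /\ (Delta psi psif w theta alpha beta <= 0 ->
      forall i : 'I_N, (forall j, w i 0 ^+ 2 / psi i <= w j 0 ^+ 2 / psi j) ->
      forall j, Upsilon psi psif w theta alpha beta (@ebasis R N j)
                <= Upsilon psi psif w theta alpha beta (@ebasis R N i)).
Proof.
have psi0 : forall j, psi j != 0 by move=> j; rewrite gt_eqF ?hpsi.
have s0 : 0 <= ss R N psi w.
  by rewrite /ss sumr_ge0 // => j _; rewrite divr_ge0 ?sqr_ge0 ?ltW.
have He : eta1 psi psif w = psif * ss R N psi w.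
  by rewrite /eta1 (invmx_of (PD psi0)) /quad -mulmxA WU mxE eqxx mulr1n.
have HG : forall a b, 0 < a -> 0 < b ->
    Gmat psi psif w a b = Xm R N psi w a (b * psif).
  move=> a b a0 b0; rewrite /Gmat; apply: invmx_of; apply: MX => //.
    by rewrite gt_eqF.
  by rewrite gt_eqF // ltr_wpDr // mulr_ge0 // mulr_ge0 // ltW.
have HS : 1 + theta ^+ 2 * (\sum_(t < T) beta t ^+ 2 / alpha t - 1)
   = \sum_(t < T) alpha t * (1 - theta * (1 - gam alpha beta t)) ^+ 2.
  transitivity (\sum_(t < T) ((1 - theta) ^+ 2 * alpha t
      + (2 * theta * (1 - theta)) * beta t + theta ^+ 2 * (beta t ^+ 2 / alpha t))).
    rewrite !big_split /= -!mulr_sumr hsa hsb.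
    set S := \sum_(t < T) beta t ^+ 2 / alpha t.
    rewrite !mulr1; ring.
  apply: eq_bigr => t _; rewrite /gam; field.
  by rewrite gt_eqF ?halpha.
have Hmain : forall i, Upsilon psi psif w theta alpha beta (@ebasis R N i)
     = 1 + theta ^+ 2 * (\sum_(t < T) beta t ^+ 2 / alpha t - 1)
       + eta1i psi psif w i / (1 + eta1 psi psif w - eta1i psi psif w i)
         * Delta psi psif w theta alpha beta.
  move=> i.
  have qs := ss_ge (w:=w) i hpsi; 
  rewrite /Upsilon quad_e HG ?ltr01 // Xii.
  under eq_bigr => t _ do rewrite quad_e HG // Xii.
  rewrite HS /Delta He /eta1i.
  set f := (w i 0 ^+ 2 * psif / psi i / _).
  transitivity (\sum_(t < T) (alpha t * (1 - theta * (1 - gam alpha beta t)) ^+ 2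
     + f * (alpha t * (1 - theta * (1 - gam alpha beta t)) ^+ 2 *
     (1 - gam alpha beta t) / (1 + psif * ss R N psi w * gam alpha beta t)))); last first.
    by rewrite big_split /= [f * _]mulr_sumr.
  rewrite mulr_suml /f.
  apply: eq_bigr => t _; rewrite /gam.
  field.
  have hps : 0 <= psif * ss R N psi w by rewrite mulr_ge0 // ltW.
  have h4 : w i 0 ^+ 2 <= ss R N psi w * psi i by rewrite -ler_pdivrMr.
  have := hpsi i; have := halpha t; have := hbeta t => hb ha hp.
  apply/and5P; split; rewrite gt_eqF //.
  - have := mulr_ge0 hps (ltW hb); lra.
  - nra.
  - lra.
have hA : forall j, 0 < 1 + eta1 psi psif w - eta1i psi psif w j.
  move=> j; rewrite He /eta1i mulrAC.
  have := ss_ge (w:=w) j hpsi; have := ler_wpM2l (ltW hpsif) (ss_ge (w:=w) j hpsi).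
  rewrite [psif * (_ / _)]mulrC; lra.
have he0 : forall j, 0 <= eta1i psi psif w j.
  by move=> j; rewrite /eta1i mulrAC mulr_ge0 ?divr_ge0 ?sqr_ge0 // ltW.
have hg : forall j k, w j 0 ^+ 2 / psi j <= w k 0 ^+ 2 / psi k ->
   eta1i psi psif w j / (1 + eta1 psi psif w - eta1i psi psif w j)
   <= eta1i psi psif w k / (1 + eta1 psi psif w - eta1i psi psif w k).
  move=> j k jk; apply: frac_mono => //.
  by rewrite /eta1i mulrAC [_ * psif / _]mulrAC ler_wpM2r // ltW.
split; first exact: Hmain.
split.
  move=> D0 i hi j; rewrite !Hmain lerD2l.
  have := hg _ _ (hi j); nra.
move=> D0 i hi j; rewrite !Hmain lerD2l.
have := hg _ _ (hi j); nra.
Qed.
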